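(* Let $A\in\mathbb{R}^{n\times n}$ be such that $\Lambda_1$ is complex and use the Euclidean norm. For $y_0\in\mathbb{R}^n$ and unit $\hat z_0\in\mathbb{R}^n$ with $w^{(1)}y_0\ne0$ and $w^{(1)}\hat z_0\neq0$, $$\sqrt{\frac{1-V_1}{1+V_1}}\le \mathrm{OT}(t,y_0,\hat z_0)\le\sqrt{\frac{1+V_1}{1-V_1}}\qquad\text{for all }t\in\mathbb{R}.$$ Moreover, if $\gamma_1(\hat z_0)-\gamma_1(\hat y_0)$ is an odd multiple of $\pi/2$, then $$\min_{t\in\mathbb{R}}\mathrm{OT}(t,y_0,\hat z_0)=\sqrt{\frac{1-V_1}{1+V_1}},\qquad \max_{t\in\mathbb{R}}\mathrm{OT}(t,y_0,\hat z_0)=\sqrt{\frac{1+V_1}{1-V_1}}.$$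
   Context: $\Lambda_1$ complex: the eigenvalues of $A$ with maximal real part are exactly a pair of simple complex conjugate eigenvalues $\lambda_1,\overline{\lambda_1}$, $\omega_1=\operatorname{Im}\lambda_1>0$. $w^{(1)}$ (row) and $v^{(1)}$ (column) are left and right eigenvectors for $\lambda_1$, $\hat w^{(1)}=w^{(1)}/\|w^{(1)}\|_2$, $\hat v^{(1)}=v^{(1)}/\|v^{(1)}\|_2$. $V_1=|(\hat v^{(1)})^T\hat v^{(1)}|\in[0,1)$ ($^T$ = transpose without conjugation). $\hat y_0=y_0/\|y_0\|_2$. Polar forms: $\hat v^{(1)}_k=|\hat v^{(1)}_k|e^{\sqrt{-1}\alpha_{1k}}$, and for real $u$ with $w^{(1)}u\ne0$, $\hat w^{(1)}u=|\hat w^{(1)}u|e^{\sqrt{-1}\gamma_1(u)}$. $\hat\Theta_1(t,u)=\big(|\hat v^{(1)}_k|\cos(\omega_1t+\alpha_{1k}+\gamma_1(u))\big)_{k=1}^n$, and $\mathrm{OT}(t,y_0,\hat z_0)=\|\hat\Theta_1(t,\hat z_0)\|_2/\|\hat\Theta_1(t,\hat y_0)\|_2$. *)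

(* Defs.v *)
From HB Require Import structures.
From mathcomp Require Import all_boot all_order all_algebra.
From mathcomp Require Import complex.
From mathcomp Require Import reals trigo.
Set Implicit Arguments. Unset Strict Implicit. Unset Printing Implicit Defensive.
Import Order.TTheory GRing.Theory Num.Theory.
Local Open Scope ring_scope.

Section Defs.
Variable R : realType.
Variable n : nat.

Definition cR (x : R) : R[i] := Complex x 0.
Definition cmx m p (A : 'M[R]_(m, p)) : 'M[R[i]]_(m, p) := map_mx cR A.
Definition cmod (z : R[i]) : R := Num.sqrt (complex.Re z ^+ 2 + complex.Im z ^+ 2).
Definition cexpi (a : R) : R[i] := Complex (cos a) (sin a).

Definition rnorm (u : 'cV[R]_n) : R := Num.sqrt (\sum_k u k 0 ^+ 2).
Definition cnorm_col (v : 'cV[R[i]]_n) : R := Num.sqrt (\sum_k cmod (v k 0) ^+ 2).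
Definition cnorm_row (w : 'rV[R[i]]_n) : R := Num.sqrt (\sum_k cmod (w 0 k) ^+ 2).

Definition rhat (u : 'cV[R]_n) : 'cV[R]_n := (rnorm u)^-1 *: u.
Definition vhat (v : 'cV[R[i]]_n) : 'cV[R[i]]_n := cR (cnorm_col v)^-1 *: v.
Definition what (w : 'rV[R[i]]_n) : 'rV[R[i]]_n := cR (cnorm_row w)^-1 *: w.

Definition wu (w : 'rV[R[i]]_n) (u : 'cV[R]_n) : R[i] := (w *m cmx u) 0 0.

(* V_1 = | (vhat)^T vhat |  (transpose without conjugation) *)
Definition V1 (v : 'cV[R[i]]_n) : R := cmod (((vhat v)^T *m vhat v) 0 0).

(* hat Theta_1(t,u), where gam = gamma_1(u), om = omega_1, al = (alpha_{1k})_k *)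
Definition Theta (v : 'cV[R[i]]_n) (om : R) (al : 'I_n -> R) (gam : R) (t : R)
  : 'cV[R]_n := \col_k (cmod (vhat v k 0) * cos (om * t + al k + gam)).

(* OT(t, y0, zhat0), with gy = gamma_1(yhat0), gz = gamma_1(zhat0) *)
Definition OT (v : 'cV[R[i]]_n) (om : R) (al : 'I_n -> R) (gy gz : R) (t : R) : R :=
  rnorm (Theta v om al gz t) / rnorm (Theta v om al gy t).

End Defs.

(* Main.v *)
Require Import Defs.
From HB Require Import structures.
From mathcomp Require Import all_boot all_order all_algebra.
From mathcomp Require Import complex.
From mathcomp Require Import reals trigo.
From mathcomp Require Import ring lra.
Import Order.TTheory GRing.Theory Num.Theory.
Local Open Scope ring_scope.

Section Helpers.
Variable R : realType.

Lemma ReD (a b : R[i]) : complex.Re (a + b) = complex.Re a + complex.Re b.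
Proof. by case: a; case: b. Qed.
Lemma ImD (a b : R[i]) : complex.Im (a + b) = complex.Im a + complex.Im b.
Proof. by case: a; case: b. Qed.
Lemma ReM (a b : R[i]) : complex.Re (a * b) = complex.Re a * complex.Re b - complex.Im a * complex.Im b.
Proof. by case: a; case: b. Qed.
Lemma ImM (a b : R[i]) : complex.Im (a * b) = complex.Re a * complex.Im b + complex.Im a * complex.Re b.
Proof. by case: a; case: b => a1 a2 b1 b2 /=; ring. Qed.
Lemma Re0 : complex.Re (0 : R[i]) = 0. Proof. by []. Qed.
Lemma Im0 : complex.Im (0 : R[i]) = 0. Proof. by []. Qed.

Definition Nf (X Y Z c s : R) := c^+2 * X - 2 * (c * s) * Z + s^+2 * Y.

Lemma Nf_key (X Y Z c s : R) : X + Y = 1 -> c^+2 + s^+2 = 1 ->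
  2 * Nf X Y Z c s - 1 = (c^+2 - s^+2) * (X - Y) - (2 * (c * s)) * (2 * Z).
Proof.
move=> h1 h2.
apply: (@eq_trans _ _ (2 * Nf X Y Z c s - (c^+2 + s^+2) * (X + Y))).
  by rewrite h1 h2 mulr1.
rewrite /Nf; ring.
Qed.

Lemma Nf_rot (X Y Z c s e : R) : X + Y = 1 -> c^+2 + s^+2 = 1 -> e^+2 = 1 ->
  Nf X Y Z (- (e * s)) (e * c) = 1 - Nf X Y Z c s.
Proof.
move=> h1 h2 h3; rewrite /Nf.
apply: (@eq_trans _ _ (e^+2 * (s^+2*X + 2*(c*s)*Z + c^+2*Y))); first ring.
rewrite h3 mul1r.
apply: (@eq_trans _ _ ((c^+2+s^+2)*(X+Y) - (c^+2*X - 2*(c*s)*Z + s^+2*Y))); first ring.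
by rewrite h1 h2 mulr1.
Qed.

Lemma N_bounds (X Y Z c s : R) : X + Y = 1 -> c^+2 + s^+2 = 1 ->
  (1 - Num.sqrt ((X - Y)^+2 + (2 * Z)^+2)) / 2 <= Nf X Y Z c s <=
  (1 + Num.sqrt ((X - Y)^+2 + (2 * Z)^+2)) / 2.
Proof.
move=> h1 h2.
have hk := @Nf_key X Y Z c s h1 h2.
set a := 2 * Nf X Y Z c s - 1 in hk.
set P := X - Y in hk *. set Q := 2 * Z in hk *.
have id : a^+2 + ((c^+2 - s^+2) * Q + (2 * (c * s)) * P)^+2
   = (c^+2 + s^+2)^+2 * (P^+2 + Q^+2) by rewrite hk; ring.
rewrite h2 expr1n mul1r in id.
have ha2 : a^+2 <= P^+2 + Q^+2 by rewrite -id lerDl sqr_ge0.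
have : `|a| <= Num.sqrt (P^+2 + Q^+2) by rewrite -sqrtr_sqr ler_wsqrtr.
rewrite ler_norml => /andP[hl hr].
rewrite /a in hl hr.
apply/andP; split; lra.
Qed.

Lemma trig_unit (p q : R) : p^+2 + q^+2 = 1 -> exists th, cos th = p /\ sin th = q.
Proof.
move=> h.
have hp : -1 <= p <= 1 by apply/andP; split; nra.
have c0 : cos (acos p) = p by rewrite acosK // in_itv /=.
have s0 : sin (acos p) = `|q|.
  by rewrite sin_acos // -h addrAC subrr add0r sqrtr_sqr.
case: (lerP 0 q) => hq.
- by exists (acos p); rewrite c0 s0 ger0_norm.
- by exists (- acos p); rewrite cosN sinN c0 s0 ltr0_norm // opprK.
Qed.

Lemma cosBpi (x : R) : cos (x - pi) = - cos x.
Proof. by rewrite -[in RHS](subrK pi x) cosDpi opprK. Qed.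
Lemma sinBpi (x : R) : sin (x - pi) = - sin x.
Proof. by rewrite -[in RHS](subrK pi x) sinDpi opprK. Qed.

Lemma cos_kpi (k : int) (a : R) : exists e : R, e^+2 = 1 /\
  cos (a + k%:~R * pi) = e * cos a /\ sin (a + k%:~R * pi) = e * sin a.
Proof.
have H : forall m : nat, forall b : R,
  (exists e : R, e^+2 = 1 /\ cos (b + m%:R * pi) = e * cos b /\ sin (b + m%:R*pi) = e * sin b) /\
  (exists e : R, e^+2 = 1 /\ cos (b - m%:R * pi) = e * cos b /\ sin (b - m%:R*pi) = e * sin b).
  elim=> [|m IH] b.
    by split; exists 1; rewrite mul0r ?subr0 ?addr0 !mul1r expr1n.
  have [[e [e2 [ec es]]] [f [f2 [fc fs]]]] := IH b.
  split.
  - exists (-e); rewrite sqrrN e2 -natr1 mulrDl mul1r addrA cosDpi sinDpi ec es.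
    by split; [|split]; rewrite ?mulNr.
  - exists (-f); rewrite sqrrN f2 -natr1 mulrDl mul1r opprD addrA cosBpi sinBpi fc fs.
    by split; [|split]; rewrite ?mulNr.
case: k => m.
- exact: (H m a).1.
- rewrite NegzE mulrNz mulNr; exact: (H m.+1 a).2.
Qed.

Lemma N_attain (X Y Z sg : R) : X + Y = 1 -> sg^+2 = 1 ->
  exists psi, Nf X Y Z (cos psi) (sin psi) = (1 + sg * Num.sqrt ((X - Y)^+2 + (2 * Z)^+2)) / 2.
Proof.
move=> h1 hs.
set P := X - Y. set Q := 2 * Z. set V := Num.sqrt _.
have hV2 : V^+2 = P^+2 + Q^+2 by rewrite sqr_sqrtr // addr_ge0 // sqr_ge0.
have [V0|V0] := eqVneq V 0.
  exists 0; rewrite cos0 sin0 V0 mulr0 addr0 /Nf.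
  have : P^+2 + Q^+2 = 0 by rewrite -hV2 V0 expr0n.
  move/eqP; rewrite paddr_eq0 ?sqr_ge0 // !sqrf_eq0 => /andP[/eqP hP _].
  rewrite /P in hP.
  have -> : X = 1/2 by lra.
  have -> : Y = 1/2 by lra.
  rewrite expr1n expr0n /=; ring.
have hu : (sg * P / V)^+2 + (- (sg * Q / V))^+2 = 1.
  rewrite sqrrN !expr_div_n ![(sg * _)^+2]exprMn hs !mul1r -mulrDl -/Q; rewrite -hV2 divff //.
  by rewrite expf_neq0.
have [th [cth sth]] := trig_unit _ _ hu.
exists (th / 2).
have hc := cos2Dsin2 (th / 2).
have hk := @Nf_key X Y Z _ _ h1 hc.
have eth : th = th / 2 + th / 2 by field.
have cth' : cos (th/2) ^+ 2 - sin (th/2) ^+2 = sg * P / V.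
  by rewrite -cth {3}eth cosD !expr2.
have sth' : 2 * (cos (th/2) * sin (th/2)) = - (sg * Q / V).
  by rewrite -sth {3}eth sinD; ring.
rewrite cth' sth' -/P -/Q in hk.
have hr : sg * P / V * P - - (sg * Q / V) * Q = sg * V.
  apply: (@eq_trans _ _ (sg * (P^+2 + Q^+2) / V)); first ring.
  by rewrite -hV2; field.
rewrite hr in hk.
lra.
Qed.

Lemma ratio_b (V a b : R) : 0 <= V -> V < 1 -> (1-V)/2 <= a -> a <= (1+V)/2 ->
  (1-V)/2 <= b -> b <= (1+V)/2 -> (1-V)/(1+V) <= a/b <= (1+V)/(1-V).
Proof.
move=> h0 h1 ha1 ha2 hb1 hb2.
have hb : 0 < b by lra.
have hp : 0 < 1 + V by lra.
have hm : 0 < 1 - V by lra.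
apply/andP; split.
- rewrite ler_pdivlMr // mulrAC ler_pdivrMr //; nra.
- rewrite ler_pdivrMr // mulrAC ler_pdivlMr //; nra.
Qed.

Lemma lagrange n (x y : 'I_n -> R) :
  \sum_j \sum_m (y j * x m - x j * y m)^+2 =
  2 * ((\sum_j x j ^+ 2) * (\sum_j y j ^+ 2) - (\sum_j x j * y j)^+2).
Proof.
transitivity (\sum_j (y j^+2 * \sum_m x m^+2 + x j^+2 * \sum_m y m^+2
   - 2 * (x j * y j) * \sum_m x m * y m)).
  apply: eq_bigr => j _.
  rewrite !mulr_sumr -big_split -sumrB /=; apply: eq_bigr => m _; ring.
rewrite sumrB big_split /= -!mulr_suml -mulr_sumr; ring.
Qed.

Lemma sumN n (x y : 'I_n -> R) (c s : R) :
  \sum_k (x k * c - y k * s)^+2 =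
  Nf (\sum_k x k ^+ 2) (\sum_k y k ^+ 2) (\sum_k x k * y k) c s.
Proof.
rewrite /Nf.
transitivity (\sum_k (c^+2 * x k^+2 - 2 * (c * s) * (x k * y k) + s^+2 * y k^+2)).
  by apply: eq_bigr => k _; ring.
by rewrite big_split sumrB /= -!mulr_sumr.
Qed.

End Helpers.
Arguments Nf {R}.
Arguments N_bounds {R}.
Arguments N_attain {R}.
Arguments ratio_b {R}.
Arguments lagrange {R n}.
Arguments sumN {R n}.
Arguments cos_kpi {R}.
Arguments Nf_rot {R}.

Theorem theorem9 (R : realType) (n : nat) (A : 'M[R]_n) (l1 : R[i])
    (w : 'rV[R[i]]_n) (v : 'cV[R[i]]_n) (y0 zh : 'cV[R]_n)
    (alpha : 'I_n -> R) (gy gz : R) :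
  (* Lambda_1 complex *)
  eigenvalue (cmx A) l1 ->
  0 < complex.Im l1 ->
  mup l1 (char_poly (cmx A)) = 1%N ->
  mup (conjc l1) (char_poly (cmx A)) = 1%N ->
  (forall mu, eigenvalue (cmx A) mu -> complex.Re mu <= complex.Re l1) ->
  (forall mu, eigenvalue (cmx A) mu -> complex.Re mu = complex.Re l1 -> mu = l1 \/ mu = conjc l1) ->
  (* left and right eigenvectors for lambda_1 *)
  w != 0 -> w *m cmx A = l1 *: w ->
  v != 0 -> cmx A *m v = l1 *: v ->
  (* polar forms *)
  (forall k, vhat v k 0 = cR (cmod (vhat v k 0)) * cexpi (alpha k)) ->
  (* data *)
  rnorm zh = 1 ->
  wu w y0 != 0 -> wu w zh != 0 ->
  wu (what w) (rhat y0) = cR (cmod (wu (what w) (rhat y0))) * cexpi gy ->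
  wu (what w) zh = cR (cmod (wu (what w) zh)) * cexpi gz ->
  (forall t : R,
     Num.sqrt ((1 - V1 v) / (1 + V1 v)) <= OT v (complex.Im l1) alpha gy gz t
     <= Num.sqrt ((1 + V1 v) / (1 - V1 v))) /\
  ((exists k : int, gz - gy = (2 * k + 1)%:~R * (pi / 2)) ->
     (exists t : R, OT v (complex.Im l1) alpha gy gz t = Num.sqrt ((1 - V1 v) / (1 + V1 v))) /\
     (exists t : R, OT v (complex.Im l1) alpha gy gz t = Num.sqrt ((1 + V1 v) / (1 - V1 v)))).
Proof.
move=> _ hb _ _ _ _ _ _ hv0 hAv hpol _ _ _ _ _.
set vh := vhat v.
set b := complex.Im l1. set a := complex.Re l1.
set X := \sum_k complex.Re (vh k 0) ^+ 2.
set Y := \sum_k complex.Im (vh k 0) ^+ 2.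
set Z := \sum_k complex.Re (vh k 0) * complex.Im (vh k 0).
have hpolr k : complex.Re (vh k 0) = cmod (vh k 0) * cos (alpha k) /\
               complex.Im (vh k 0) = cmod (vh k 0) * sin (alpha k).
  have E := hpol k; rewrite -/vh in E; move: E.
  set z := vh k 0 => E.
  by rewrite {1 3}E /cR /cexpi ReM ImM /= mul0r subr0 mul0r addr0.
have hTh gam t : rnorm (Theta v b alpha gam t) =
    Num.sqrt (Nf X Y Z (cos (b * t + gam)) (sin (b * t + gam))).
  rewrite /rnorm -sumN; congr (Num.sqrt _); apply: eq_bigr => k _.
  rewrite /Theta mxE -/vh.
  have [-> ->] := hpolr k.
  rewrite (addrAC _ (alpha k)) cosD; ring.
set nv := cnorm_col v.
have hvh k : vh k 0 = cR nv^-1 * v k 0 by rewrite /vh /vhat mxE.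
have hS : nv ^+ 2 = \sum_k cmod (v k 0) ^+ 2.
  by rewrite /nv /cnorm_col sqr_sqrtr // sumr_ge0 // => k _; exact: sqr_ge0.
have hcm (z : R[i]) : cmod z ^+ 2 = complex.Re z ^+ 2 + complex.Im z ^+ 2.
  by rewrite /cmod sqr_sqrtr // addr_ge0 // sqr_ge0.
have nv0 : nv != 0.
  apply/eqP => h0; move: hS; rewrite h0 expr0n /= => /esym /eqP.
  rewrite psumr_eq0; last by move=> k _; exact: sqr_ge0.
  move=> /allP hall; move/negP: hv0; apply.
  apply/eqP/matrixP => i j; rewrite (ord1 j) mxE.
  have := hall i (mem_index_enum i); rewrite /= hcm.
  rewrite paddr_eq0 ?sqr_ge0 // !sqrf_eq0 => /andP[/eqP ha' /eqP hb'].
  by move: ha' hb'; case: (v i 0) => a0 b0 /= -> ->.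
have hXY : X + Y = 1.
  rewrite /X /Y -big_split /=.
  transitivity (\sum_k nv^-1 ^+ 2 * cmod (v k 0) ^+ 2).
    apply: eq_bigr => k _; rewrite hvh hcm ReM ImM /cR /=; ring.
  by rewrite -mulr_sumr -hS exprVn mulVf // expf_neq0.
have hV : V1 v = Num.sqrt ((X - Y)^+2 + (2 * Z)^+2).
  rewrite /V1 -/vh /cmod; congr (Num.sqrt _).
  have -> : ((vh)^T *m vh) 0 0 = \sum_k vh k 0 * vh k 0.
    by rewrite mxE; apply: eq_bigr => k _; rewrite mxE.
  rewrite (big_morph (@complex.Re R) (@ReD R) (@Re0 R)).
  rewrite (big_morph (@complex.Im R) (@ImD R) (@Im0 R)).
  congr (_ ^+ 2 + _ ^+ 2).
    by rewrite /X /Y -sumrB; apply: eq_bigr => k _; rewrite ReM !expr2.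
  by rewrite /Z mulr_sumr; apply: eq_bigr => k _; rewrite ImM; ring.
have hA : cmx A *m vh = l1 *: vh.
  by rewrite /vh /vhat -scalemxAr hAv !scalerA mulrC.
have hcmx j m : cmx A j m = cR (A j m) by rewrite /cmx mxE.
have hrow j : \sum_m A j m * complex.Re (vh m 0) = a * complex.Re (vh j 0) - b * complex.Im (vh j 0)
   /\ \sum_m A j m * complex.Im (vh m 0) = a * complex.Im (vh j 0) + b * complex.Re (vh j 0).
  have := congr1 (fun M : 'M[R[i]]_(n,1) => M j 0) hA; rewrite /= !mxE => e.
  split.
  - move/(congr1 (@complex.Re R)): e.
    rewrite (big_morph (@complex.Re R) (@ReD R) (@Re0 R)) ReM => <-.
    by apply: eq_bigr => m _; rewrite hcmx ReM /cR /=; ring.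
  - move/(congr1 (@complex.Im R)): e.
    rewrite (big_morph (@complex.Im R) (@ImD R) (@Im0 R)) ImM => <-.
    by apply: eq_bigr => m _; rewrite hcmx ImM /cR /=; ring.
have hG : 0 < X * Y - Z ^+ 2.
  pose x k := complex.Re (vh k 0). pose y k := complex.Im (vh k 0).
  have hid : - b = \sum_j \sum_m A j m * (y j * x m - x j * y m).
    transitivity (\sum_j (y j * (\sum_m A j m * x m) - x j * (\sum_m A j m * y m))).
      rewrite (eq_bigr (fun j => - b * (x j ^+ 2 + y j ^+ 2))); last first.
        by move=> j _; have [h1 h2] := hrow j; rewrite /x /y h1 h2; ring.
      by rewrite -mulr_sumr big_split /= hXY mulr1.
    apply: eq_bigr => j _; rewrite !mulr_sumr -sumrB.
    by apply: eq_bigr => m _; ring.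
  rewrite ltNge; apply/negP => hle.
  have hL := lagrange x y.
  have h0 : \sum_j \sum_m (y j * x m - x j * y m) ^+ 2 = 0.
    apply/eqP; rewrite eq_le; apply/andP; split.
      by rewrite hL; rewrite /X /Y /Z in hle; nra.
    by apply: sumr_ge0 => j _; apply: sumr_ge0 => m _; exact: sqr_ge0.
  have hD j m : y j * x m - x j * y m = 0.
    have h1 := psumr_eq0P (fun j _ => sumr_ge0 _ (fun m _ => sqr_ge0 (y j * x m - x j * y m))) h0.
    have h2 := h1 j isT.
    have h3 := psumr_eq0P (fun m _ => sqr_ge0 (y j * x m - x j * y m)) h2.
    by apply/eqP; rewrite -sqrf_eq0; apply/eqP; exact: h3.
  move: hid; rewrite big1; last first.
    by move=> j _; rewrite big1 // => m _; rewrite hD mulr0.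
  move/eqP; rewrite oppr_eq0 => /eqP hb0.
  by move: hb; rewrite -/b hb0 ltxx.
have V0 : 0 <= V1 v by rewrite hV sqrtr_ge0.
have V1lt : V1 v < 1.
  rewrite hV -[X in _ < X]sqrtr1 ltr_sqrt ?ltr01 //.
  have -> : (X - Y)^+2 + (2 * Z)^+2 = (X + Y)^+2 - 4 * (X * Y - Z^+2) by ring.
  rewrite hXY expr1n; lra.
have hNb phi := N_bounds X Y Z _ _ hXY (cos2Dsin2 phi).
split.
  move=> t; rewrite /OT !hTh.
  have := hNb (b * t + gz); have := hNb (b * t + gy); rewrite -hV.
  set Nz := Nf _ _ _ (cos (b * t + gz)) _.
  set Ny := Nf _ _ _ (cos (b * t + gy)) _.
  move=> /andP[hy1 hy2] /andP[hz1 hz2].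
  have hy0 : 0 <= Ny by lra.
  have hz0 : 0 <= Nz by lra.
  rewrite -sqrtrV // -sqrtrM //.
  have /andP[r1 r2] := ratio_b _ _ _ V0 V1lt hz1 hz2 hy1 hy2.
  by rewrite !ler_wsqrtr.
move=> [k hk].
have hz psi : Nf X Y Z (cos (psi + (gz - gy))) (sin (psi + (gz - gy))) =
              1 - Nf X Y Z (cos psi) (sin psi).
  have -> : psi + (gz - gy) = (psi + k%:~R * pi) + pi / 2.
    by rewrite hk intrD intrM /=; field.
  rewrite (cosDpihalf (psi + k%:~R * pi)) (sinDpihalf (psi + k%:~R * pi)).
  have [e [e2 [ec es]]] := cos_kpi k psi.
  by rewrite ec es Nf_rot // cos2Dsin2.
have hb0 : b != 0 by rewrite gt_eqF.
have hopt sg : sg ^+ 2 = 1 -> exists t, OT v b alpha gy gz t =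
    Num.sqrt ((1 - sg * V1 v) / (1 + sg * V1 v)).
  move=> hs.
  have [psi hpsi] := N_attain X Y Z sg hXY hs.
  exists ((psi - gy) / b).
  rewrite /OT !hTh.
  have -> : b * ((psi - gy) / b) + gy = psi by field.
  have -> : b * ((psi - gy) / b) + gz = psi + (gz - gy) by field.
  rewrite hz hpsi -hV.
  have [hsv1 hsv2] : -1 < sg * V1 v /\ sg * V1 v < 1.
    by move/eqP: hs; rewrite sqrf_eq1 => /orP[/eqP->|/eqP->];
      rewrite ?mul1r ?mulN1r; split; lra.
  have hp : 0 < 1 + sg * V1 v by lra.
  have hp2 : 0 <= (1 + sg * V1 v) / 2 by lra.
  rewrite -sqrtrV // -sqrtrM; last by lra.
  congr (Num.sqrt _); field.
  by rewrite gt_eqF.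
split.
  have [t ht] := hopt 1 (expr1n _ _).
  by exists t; rewrite ht mul1r.
have hs1 : (-1 : R)^+2 = 1 by rewrite sqrrN expr1n.
have [t ht] := hopt (-1) hs1.
by exists t; rewrite ht !mulN1r opprK.
Qed.
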